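(* Let $G=(V,E)$ be a finite simple undirected graph whose vertex set is partitioned into color classes $V_1,\dots,V_r$, and suppose $(V_{\eta_1},\dots,V_{\eta_r})$, $\eta\in\mathfrak{S}_r$, is a color perfect elimination ordering. Then for every $i\in[r]$ the induced subgraph $G[V_i]$ is a disjoint union of cliques.
   Context: An ordered partition $(V_{\eta_1},\dots,V_{\eta_r})$ is a color perfect elimination ordering (cpeo) if for every $i\in[r]$ and every $v\in V_{\eta_i}$, $v$ is simplicial in $G[V_{\eta_i}\cup\dots\cup V_{\eta_r}]$, i.e. its neighbours in that induced subgraph form a clique. *)

(* Defs.v *)
From mathcomp Require Import all_boot all_order all_fingroup.
Set Implicit Arguments. Unset Strict Implicit. Unset Printing Implicit Defensive.

Definition simple_graph (T : finType) (e : rel T) : Prop :=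
  symmetric e /\ irreflexive e.

Definition is_clique (T : finType) (e : rel T) (K : {set T}) : Prop :=
  forall x y, x \in K -> y \in K -> x != y -> e x y.

Definition simplicial_in (T : finType) (e : rel T) (U : {set T}) (v : T) : Prop :=
  is_clique e [set u in U | e v u].

Definition color_class (T : finType) (r : nat) (c : T -> 'I_r) (k : 'I_r) : {set T} :=
  [set v | c v == k].

(* V_{eta_i} ∪ ... ∪ V_{eta_r}  (0-indexed: positions j >= i). *)
Definition tail_union (T : finType) (r : nat) (c : T -> 'I_r) (eta : 'S_r) (i : 'I_r)
  : {set T} :=
  \bigcup_(j : 'I_r | i <= j) color_class c (eta j).

Definition cpeo (T : finType) (e : rel T) (r : nat) (c : T -> 'I_r) (eta : 'S_r) : Prop :=
  forall (i : 'I_r) (v : T), v \in color_class c (eta i) ->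
    simplicial_in e (tail_union c eta i) v.

Definition disjoint_union_of_cliques (T : finType) (e : rel T) (S : {set T}) : Prop :=
  exists P : {set {set T}}, partition P S /\
    (forall K, K \in P -> is_clique e K) /\
    (forall K1 K2 x y, K1 \in P -> K2 \in P -> K1 != K2 ->
       x \in K1 -> y \in K2 -> ~~ e x y).

(* Main.v *)
Require Import Defs.
From mathcomp Require Import all_boot all_order all_fingroup.

Theorem corollary3p3 (T : finType) (e : rel T) (r : nat) (c : T -> 'I_r)
    (eta : 'S_r) :
  simple_graph e -> cpeo e c eta ->
  forall i : 'I_r, disjoint_union_of_cliques e (color_class c i).
Proof.
move=> [esym eirr] hc i.
set S := color_class c i.
have etrans : forall x y z, x \in S -> y \in S -> z \in S ->
    e x y -> e y z -> x != z -> e x z.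
  move=> x y z xS yS zS exy eyz nxz.
  set j := (eta^-1)%g i.
  have ej : eta j = i by rewrite /j permKV.
  have hy : y \in color_class c (eta j) by rewrite ej.
  have tS : forall u, u \in S -> u \in tail_union c eta j.
    move=> u uS; apply/bigcupP; exists j => //; by rewrite ej.
  apply: (hc j y hy x z) => //; rewrite inE ?tS //= ?eyz //.
  by rewrite esym.
pose R := fun x y => (x == y) || e x y.
have Rsym : forall x y, R x y = R y x.
  by move=> x y; rewrite /R eq_sym esym.
have Rtr : forall x y z, x \in S -> y \in S -> z \in S -> R x y -> R y z -> R x z.
  move=> x y z xS yS zS; rewrite /R.
  case/orP=> [/eqP -> //|exy]; case/orP=> [/eqP <- |eyz]; first by rewrite exy orbT.
  case: (eqVneq x z) => [//|nxz]; by rewrite (etrans x y z).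
have eqR : {in S & &, equivalence_rel R}.
  move=> x y z xS yS zS; split; first by rewrite /R eqxx.
  move=> Rxy; apply/idP/idP => H.
    by apply: (Rtr y x z) => //; rewrite Rsym.
  exact: (Rtr x y z xS yS zS Rxy H).
have hP := equivalence_partitionP eqR.
exists (equivalence_partition R S); split => //; split.
  move=> K /imsetP [a aS ->] x y /setIdP [xS Rax] /setIdP [yS Ray] nxy.
  have Rax' : R a x := Rax. have Ray' : R a y := Ray.
  have Rxa : R x a by rewrite Rsym.
  have : R x y by apply: (Rtr x a y).
  by rewrite /R (negbTE nxy).
move=> K1 K2 x y /imsetP [a aS ->] /imsetP [b bS ->] nK.
move=> /setIdP [xS Rax] /setIdP [yS Rby]; apply/negP => exy.
have Rax' : R a x := Rax. have Rby' : R b y := Rby.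
have Rab : R a b.
  apply: (Rtr a x b) => //; apply: (Rtr x y b) => //; first by rewrite /R exy orbT.
  by rewrite Rsym.
move/negP: nK; apply; apply/eqP/setP => t.
apply/setIdP/setIdP => [[tS H]|[tS H]]; split => //.
  by apply: (Rtr b a t) => //; rewrite Rsym.
exact: (Rtr a b t).
Qed.
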